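(* Let $\Lambda=\{\lambda_1,\dots,\lambda_N\}$ be a finite set of non-zero complex numbers such that (1) $\Lambda=\bar\Lambda$ (closed under complex conjugation), (2) $1\in\Lambda$, and (3) $|\lambda|\le1$ for all $\lambda\in\Lambda$. Then there exists a completely positive trace-preserving linear map $T:\mathcal{M}_d(\mathbb{C})\to\mathcal{M}_d(\mathbb{C})$ with $d\le 2\max\{N-1,1\}$ such that $\{\mathrm{spec}(T)\}\setminus\{0\}=\Lambda$. Conversely, if $\Lambda$ is the spectral set $\{\mathrm{spec}(T)\}$ of a positive trace-preserving linear map $T$ on some $\mathcal{M}_d(\mathbb{C})$, then $\Lambda$ satisfies (1)–(3).
   Context: $\{\mathrm{spec}(T)\}$ denotes the spectral set of $T$: the set (without multiplicities) of $\lambda\in\mathbb{C}$ for which $T-\lambda\,\mathrm{id}$ is not invertible on $\mathcal{M}_d(\mathbb{C})$. Positive: maps positive semidefinite matrices to positive semidefinite matrices; completely positive: $T\otimes\mathrm{id}_d$ is positive; trace-preserving: $\mathrm{tr}[T(X)]=\mathrm{tr}[X]$. *)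

(* Defs.v *)
(* Complex numbers are modelled by an arbitrary
   numClosedFieldType C (algebraically closed field with conjugation/order,
   e.g. algC; the statement is uniform in C). *)
From HB Require Import structures.
From mathcomp Require Import all_boot all_order all_algebra.
Set Implicit Arguments. Unset Strict Implicit. Unset Printing Implicit Defensive.
Import Order.TTheory GRing.Theory Num.Theory.
Local Open Scope ring_scope.

Definition adjmx (C : numClosedFieldType) m n (A : 'M[C]_(m, n)) : 'M[C]_(n, m) :=
  map_mx (fun x => x^*) A^T.

Definition psdmx (C : numClosedFieldType) n (A : 'M[C]_n) : Prop :=
  adjmx A = A /\ forall v : 'cV[C]_n, 0 <= (adjmx v *m A *m v) 0 0.

Definition in_spec (C : numClosedFieldType) d (T : 'M[C]_d -> 'M[C]_d) (l : C) : Prop :=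
  ~ bijective (fun X => T X - l *: X).

Definition positive_map (C : numClosedFieldType) d (T : 'M[C]_d -> 'M[C]_d) : Prop :=
  forall X, psdmx X -> psdmx (T X).

Definition trace_preserving (C : numClosedFieldType) d (T : 'M[C]_d -> 'M[C]_d) : Prop :=
  forall X, \tr (T X) = \tr X.

(* M_d ⊗ M_d is identified with M_(d*d) via the index pairing
   (a, b) |-> mxvec_index a b, a the index of the first tensor factor. *)
Definition pblock (C : numClosedFieldType) d (Y : 'M[C]_(d * d)) (b e : 'I_d) : 'M[C]_d :=
  \matrix_(a, c) Y (mxvec_index a b) (mxvec_index c e).

(* Z = (T ⊗ id_d) Y *)
Definition ampl_rel (C : numClosedFieldType) d (T : 'M[C]_d -> 'M[C]_d)
    (Y Z : 'M[C]_(d * d)) : Prop :=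
  forall a b c e : 'I_d, Z (mxvec_index a b) (mxvec_index c e) = T (pblock Y b e) a c.

Definition completely_positive (C : numClosedFieldType) d (T : 'M[C]_d -> 'M[C]_d) : Prop :=
  forall Y Z : 'M[C]_(d * d), ampl_rel T Y Z -> psdmx Y -> psdmx Z.

(* Main.v *)
Require Import Defs.
From HB Require Import structures.
From mathcomp Require Import all_boot all_order all_algebra.
Set Implicit Arguments. Unset Strict Implicit. Unset Printing Implicit Defensive.
Import Order.TTheory GRing.Theory Num.Theory.
Local Open Scope ring_scope.

Section P2.
Variable C : numClosedFieldType.

Lemma spec_eig d (T : {linear 'M[C]_d -> 'M[C]_d}) z :
  in_spec T z <-> exists2 X, X != 0 & T X = z *: X.
Proof.
split; last first.
  move=> [X hX hTX] [g hg1 _].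
  have e1 := hg1 X; have e2 := hg1 0.
  rewrite /= hTX subrr in e1; rewrite /= linear0 scaler0 subr0 in e2.
  by move: hX; rewrite -e1 e2 eqxx.
move=> hns.
pose F := (linfun T - z *: \1)%VF.
have FE : forall X, F X = T X - z *: X.
  by move=> X; rewrite add_lfunE opp_lfunE scale_lfunE id_lfunE lfunE.
case: (eqVneq (lker F) 0%VS) => hk.
  exfalso; apply: hns; exists (F^-1)%VF => X /=; rewrite -FE.
    by apply: lker0_lfunK; rewrite hk.
  by apply: lker0_lfunVK; rewrite hk.
exists (vpick (lker F)); first by rewrite vpick0.
have := memv_pick (lker F); rewrite memv_ker FE subr_eq0 => /eqP //.
Qed.


Lemma adjmxE m n (A : 'M[C]_(m, n)) i j : adjmx A i j = (A j i)^*.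
Proof. by rewrite /adjmx !mxE. Qed.
Lemma adjmxD m n (A B : 'M[C]_(m, n)) : adjmx (A + B) = adjmx A + adjmx B.
Proof. by apply/matrixP=> i j; rewrite !(adjmxE, mxE) rmorphD. Qed.
Lemma adjmxN m n (A : 'M[C]_(m, n)) : adjmx (- A) = - adjmx A.
Proof. by apply/matrixP=> i j; rewrite !(adjmxE, mxE) rmorphN. Qed.
Lemma adjmxB m n (A B : 'M[C]_(m, n)) : adjmx (A - B) = adjmx A - adjmx B.
Proof. by rewrite adjmxD adjmxN. Qed.
Lemma adjmxZ m n a (A : 'M[C]_(m, n)) : adjmx (a *: A) = a^* *: adjmx A.
Proof. by apply/matrixP=> i j; rewrite !(adjmxE, mxE) rmorphM. Qed.
Lemma adjmxK m n (A : 'M[C]_(m, n)) : adjmx (adjmx A) = A.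
Proof. by apply/matrixP=> i j; rewrite !adjmxE conjCK. Qed.
Lemma adjmxM m n p (A : 'M[C]_(m, n)) (B : 'M[C]_(n, p)) :
  adjmx (A *m B) = adjmx B *m adjmx A.
Proof.
apply/matrixP=> i j; rewrite !(adjmxE, mxE) rmorph_sum; apply: eq_bigr => t _.
by rewrite rmorphM !adjmxE mulrC.
Qed.
Lemma adjmx_sum m n I (r : seq I) (P : pred I) (F : I -> 'M[C]_(m, n)) :
  adjmx (\sum_(i <- r | P i) F i) = \sum_(i <- r | P i) adjmx (F i).
Proof.
elim/big_rec2: _ => [|i A B _ <-]; last by rewrite adjmxD.
by apply/matrixP=> i j; rewrite !(adjmxE, mxE) conjC0.
Qed.

Lemma psd_rank1 n (w : 'cV[C]_n) : psdmx (w *m adjmx w).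
Proof.
split; first by rewrite adjmxM adjmxK.
move=> v.
have -> : adjmx v *m (w *m adjmx w) *m v = (adjmx v *m w) *m adjmx (adjmx v *m w).
  by rewrite adjmxM adjmxK !mulmxA.
set a := adjmx v *m w.
by rewrite !mxE big_ord1 adjmxE mul_conjC_ge0.
Qed.

Lemma aux3 (V : zmodType) (a m b : V) : a + m + b - a - b = m.
Proof. by rewrite addrAC addrK addrC addKr. Qed.

Lemma polar2 d (u w : 'cV[C]_d) :
  let R x := x *m adjmx x in
  (2%:R : C) *: (u *m adjmx w) = (R (u + w) - R u - R w) + 'i *: (R (u + 'i *: w) - R u - R w)
  /\ (2%:R : C) *: (w *m adjmx u) = (R (u + w) - R u - R w) - 'i *: (R (u + 'i *: w) - R u - R w).
Proof.
move=> R.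
have hic : 'i * 'i^* = 1 :> C by rewrite conjCi mulrN mulCii opprK.
have hic' : 'i^* * 'i = 1 :> C by rewrite mulrC.
set P := R u; set W := R w; set Q := u *m adjmx w; set Q' := w *m adjmx u.
have h1 : R (u + w) = P + (Q + Q') + W by rewrite /R adjmxD mulmxDl !mulmxDr !addrA.
have h2 : R (u + 'i *: w) = P + ('i^* *: Q + 'i *: Q') + W.
  rewrite /R adjmxD adjmxZ mulmxDl !mulmxDr -!scalemxAr -!scalemxAl scalerA hic' scale1r.
  by rewrite !addrA.
rewrite h1 h2 !aux3 scalerDr !scalerA hic mulCii scale1r scaleN1r !scaler_nat !mulr2n.
split; first by rewrite addrACA subrr addr0.
by rewrite opprD opprK addrACA subrr add0r.
Qed.

Lemma herm_pres d (T : {linear 'M[C]_d -> 'M[C]_d}) :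
  positive_map T -> forall X, adjmx (T X) = T (adjmx X).
Proof.
move=> hT.
pose R (w : 'cV[C]_d) := w *m adjmx w.
have hR : forall w, adjmx (T (R w)) = T (R w) by move=> w; case: (hT _ (psd_rank1 w)).
have key : forall u w : 'cV[C]_d, adjmx (T (u *m adjmx w)) = T (w *m adjmx u).
  move=> u w.
  pose A := T (R (u + w)) - T (R u) - T (R w).
  pose B := T (R (u + 'i *: w)) - T (R u) - T (R w).
  have hA : adjmx A = A by rewrite /A !adjmxB !hR.
  have hB : adjmx B = B by rewrite /B !adjmxB !hR.
  have [p1 p2] := polar2 u w.
  have h2 : (2%:R : C) != 0 by rewrite pnatr_eq0.
  have e1 : T (u *m adjmx w) = 2^-1 *: (A + 'i *: B).
    by rewrite /A /B -!linearB -linearZ -linearD -p1 linearZ scalerA mulVf // scale1r.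
  have e2 : T (w *m adjmx u) = 2^-1 *: (A - 'i *: B).
    by rewrite /A /B -!linearB -linearZ -linearB -p2 linearZ scalerA mulVf // scale1r.
  by rewrite e1 e2 adjmxZ adjmxD adjmxZ hA hB conjCi scaleNr conj_Creal ?realV ?realn.
move=> X.
have -> : X = \sum_j (col j X) *m adjmx (delta_mx j 0 : 'cV[C]_d).
  apply/matrixP=> i k; rewrite summxE (bigD1 k) //= big1 ?addr0.
    by rewrite !mxE big_ord1 adjmxE !mxE !eqxx conjC1 mulr1.
  by move=> j hj; rewrite !mxE big_ord1 adjmxE !mxE eq_sym (negbTE hj) conjC0 mulr0.
rewrite !linear_sum !adjmx_sum !linear_sum /=; apply eq_bigr => j _.
by rewrite key adjmxM adjmxK.
Qed.
Lemma adjmx0 m n : adjmx (0 : 'M[C]_(m, n)) = 0.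
Proof. by apply/matrixP=> i j; rewrite adjmxE !mxE conjC0. Qed.
End P2.

Section Gen.
Variable C : numClosedFieldType.


Lemma quadE n (A : 'M[C]_n) (v : 'cV[C]_n) :
  (adjmx v *m A *m v) 0 0 = \sum_i \sum_j (v i 0)^* * A i j * v j 0.
Proof.
rewrite mxE [RHS]exchange_big /=; apply: eq_bigr => j _.
rewrite mxE mulr_suml; apply: eq_bigr => i _.
by rewrite adjmxE.
Qed.

Lemma ac5 (a b c y e : C) : a * (b * c * y) * e = (b * a) * y * (c * e).
Proof.
rewrite [b * a]mulrC !mulrA; congr (_ * _).
by rewrite -!mulrA; congr (_ * (_ * _)); rewrite mulrC.
Qed.

Lemma schur_psd n k (Y : 'M[C]_n) (G : 'M[C]_(n, k)) :
  psdmx Y -> psdmx (\matrix_(p, q) ((G *m adjmx G) p q * Y p q)).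
Proof.
move=> [hY pY]; split.
  apply/matrixP=> i j; rewrite adjmxE !mxE rmorphM /=.
  have -> : (Y j i)^* = Y i j by rewrite -adjmxE hY.
  congr (_ * _); rewrite rmorph_sum /=; apply: eq_bigr => t _ /=.
  by rewrite rmorphM /= !adjmxE conjCK mulrC.

move=> v; rewrite quadE.
pose w (t : 'I_k) : 'cV[C]_n := \col_q ((G q t)^* * v q 0).
have -> : \sum_i \sum_j (v i 0)^* * (\matrix_(p, q) ((G *m adjmx G) p q * Y p q)) i j * v j 0
   = \sum_t (adjmx (w t) *m Y *m w t) 0 0.
  rewrite (eq_bigr (fun t => \sum_i \sum_j ((w t) i 0)^* * Y i j * (w t) j 0)); last first.
    by move=> t _; rewrite quadE.
  rewrite [RHS]exchange_big /=; apply: eq_bigr => i _.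
  rewrite [RHS]exchange_big /=; apply: eq_bigr => j _.
  rewrite !mxE mulr_suml mulr_sumr mulr_suml; apply: eq_bigr => t _.
  by rewrite !mxE rmorphM /= conjCK ac5.
by apply: sumr_ge0 => t _; apply: pY.
Qed.


Definition schur d (M X : 'M[C]_d) : 'M[C]_d := \matrix_(i, j) (M i j * X i j).
Lemma schur_linear d (M : 'M[C]_d) : linear (schur M).
Proof. by move=> a X Y; apply/matrixP=> i j; rewrite !mxE mulrDr mulrCA. Qed.
HB.instance Definition _ d (M : 'M[C]_d) :=
  GRing.isLinear.Build C 'M[C]_d 'M[C]_d _ (schur M) (schur_linear M).

Definition fstI d (p : 'I_(d * d)) : 'I_d :=
  (enum_val (cast_ord (esym (mxvec_cast d d)) p)).1.
Lemma fstIE d (a b : 'I_d) : fstI (mxvec_index a b) = a.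
Proof. by rewrite /fstI /mxvec_index cast_ordK enum_rankK. Qed.

Lemma schur_cp d k (G : 'M[C]_(d, k)) : completely_positive (schur (G *m adjmx G)).
Proof.
move=> Y Z hrel pY.
pose G' : 'M[C]_(d * d, k) := \matrix_(p, t) G (fstI p) t.
suff -> : Z = \matrix_(p, q) ((G' *m adjmx G') p q * Y p q) by apply: schur_psd.
apply/matrixP=> p q; case/mxvec_indexP: p => a b; case/mxvec_indexP: q => c e.
rewrite hrel !mxE; congr (_ * _).
by apply: eq_bigr => t _; rewrite !mxE !fstIE.
Qed.

Lemma schur_tp d (M : 'M[C]_d) : (forall i, M i i = 1) -> trace_preserving (schur M).
Proof.
by move=> hM X; rewrite /mxtrace; apply: eq_bigr => i _; rewrite mxE hM mul1r.
Qed.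

Lemma schur_spec d (M : 'M[C]_d) z :
  in_spec (schur M) z <-> exists a c, M a c = z.
Proof.
split.
  move=> hns.
  case: (boolP [exists a, exists c, M a c == z]) => [/existsP [a /existsP [c /eqP h]]|hn].
    by exists a, c.
  exfalso; apply: hns.
  have hne : forall a c, M a c - z != 0.
    move=> a c; rewrite subr_eq0; apply/negP => /eqP h; move/negP: hn; apply.
    by apply/existsP; exists a; apply/existsP; exists c; rewrite h.
  exists (schur (\matrix_(i, j) (M i j - z)^-1)) => X; apply/matrixP => i j; rewrite !mxE.
    have -> : M i j * X i j - z * X i j = (M i j - z) * X i j by rewrite mulrBl.
    by rewrite mulKf.
  have -> : forall y : C, M i j * y - z * y = (M i j - z) * y by move=> y; rewrite mulrBl.
  by rewrite mulrA mulfV ?mul1r.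
move=> [a [c hac]] [g hg1 hg2].
have h0 : schur M (delta_mx a c) - z *: delta_mx a c = 0.
  apply/matrixP=> i j; rewrite !mxE.
  have -> : forall y : C, M i j * y - z * y = (M i j - z) * y by move=> y; rewrite mulrBl.
  case: (eqVneq i a) => [->|hia]; last by rewrite andFb mulr0.
  case: (eqVneq j c) => [->|hjc]; last by rewrite andbF mulr0.
  by rewrite hac subrr mul0r.
have e1 := hg1 (delta_mx a c); have e2 := hg1 0.
rewrite /= raddf0 scaler0 subr0 in e2; rewrite /= h0 e2 in e1.
move/matrixP: e1 => /(_ a c); rewrite !mxE !eqxx /= => /eqP; rewrite eq_sym oner_eq0 //.
Qed.

Lemma adjmx_block m1 m2 n1 n2 (A : 'M[C]_(m1, n1)) (B : 'M[C]_(m1, n2))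
   (D1 : 'M[C]_(m2, n1)) (D2 : 'M[C]_(m2, n2)) :
  adjmx (block_mx A B D1 D2) = block_mx (adjmx A) (adjmx D1) (adjmx B) (adjmx D2).
Proof. by rewrite /adjmx tr_block_mx map_block_mx. Qed.

Lemma adjmx1 n : adjmx (1%:M : 'M[C]_n) = 1%:M.
Proof. by apply/matrixP=> i j; rewrite adjmxE !mxE eq_sym rmorph_nat. Qed.
Lemma adjmx_diag n (v : 'rV[C]_n) : adjmx (diag_mx v) = diag_mx (\row_i (v 0 i)^*).
Proof.
apply/matrixP=> i j; rewrite adjmxE !mxE eq_sym.
by case: eqP => [->|]; rewrite ?mulr1n ?mulr0n ?conjC0.
Qed.

Section Constr.
Variable k : nat.
Variable lam : 'I_k -> C.
Hypothesis lam1 : forall i, `|lam i| <= 1.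

Definition Gm : 'M[C]_(k + k) := block_mx 1%:M 0
   (diag_mx (\row_i (lam i)^*)) (diag_mx (\row_i sqrtC (1 - `|lam i| ^+ 2))).
Definition Mm : 'M[C]_(k + k) := block_mx 1%:M (diag_mx (\row_i lam i))
   (diag_mx (\row_i (lam i)^*)) 1%:M.

Lemma MmE : Gm *m adjmx Gm = Mm.
Proof.
rewrite /Gm /Mm adjmx_block adjmx1 adjmx0 !adjmx_diag mulmx_block.
rewrite !mul1mx !mulmx1 !mul0mx !mulmx0 !addr0 !mulmx_diag.
congr block_mx; apply/matrixP => i j; rewrite !mxE ?conjCK //.
case: eqP => [->|]; rewrite ?mulr1n ?mulr0n ?addr0 //.
have h : 0 <= 1 - `|lam j| ^+ 2.
  by rewrite subr_ge0 exprn_ile1 ?normr_ge0.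
have hs : sqrtC (1 - `|lam j| ^+ 2) \is Num.real by apply: ger0_real; rewrite sqrtC_ge0.
rewrite (conj_Creal hs) -expr2 sqrtCK.
by rewrite mulrC -normCK addrC subrK.
Qed.

Lemma Mm_diag i : Mm i i = 1.
Proof.
by case: (split_ordP i) => j ->; rewrite /Mm ?block_mxEul ?block_mxEdr mxE eqxx.
Qed.

Lemma Mm_entries z : (0 < k)%N -> z != 0 -> ((exists a c, Mm a c = z) <->
  (z = 1 \/ exists i, z = lam i \/ z = (lam i)^*)).
Proof.
move=> k0 z0; split.
  move=> [a [c hz]]; move: hz z0.
  case: (split_ordP a) => a' ->; case: (split_ordP c) => c' ->;
   rewrite /Mm ?block_mxEul ?block_mxEur ?block_mxEdl ?block_mxEdr !mxE.
  1-4: case: (a' == c') => <-; rewrite ?mulr1n ?mulr0n ?eqxx //.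
  1-4: by [left | right; exists a'; left | right; exists a'; right].
case=> [->|[i [->|->]]].
- by exists (lshift k (Ordinal k0)), (lshift k (Ordinal k0)); rewrite Mm_diag.
- by exists (lshift k i), (rshift k i); rewrite /Mm block_mxEur !mxE eqxx mulr1n.
- by exists (rshift k i), (lshift k i); rewrite /Mm block_mxEdl !mxE eqxx mulr1n.
Qed.

End Constr.

Lemma part1 (Lambda : seq C) :
     uniq Lambda ->
     (forall l, l \in Lambda -> l != 0) ->
     (forall l, l \in Lambda -> l^* \in Lambda) ->
     1 \in Lambda ->
     (forall l, l \in Lambda -> `|l| <= 1) ->
     exists d : nat, (d <= 2 * maxn (size Lambda).-1 1)%N /\
       exists T : {linear 'M[C]_d -> 'M[C]_d},
         completely_positive T /\ trace_preserving T /\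
         (forall z : C, (in_spec T z /\ z != 0) <-> z \in Lambda).
Proof.
move=> uL nz cL oneL nL.
set k := maxn (size Lambda).-1 1.
have k0 : (0 < k)%N by rewrite leq_max orbT.
pose L := rem 1 Lambda.
pose lam (i : 'I_k) := nth 1 L i.
have lamIn : forall i, lam i \in Lambda.
  move=> i; rewrite /lam; case: (ltnP i (size L)) => hi.
    exact: (mem_rem (mem_nth 1 hi)).
  by rewrite nth_default.
have lam1 : forall i, `|lam i| <= 1 by move=> i; apply: nL.
exists (k + k)%N; split; first by rewrite addnn -mul2n.
exists (schur (Gm lam *m adjmx (Gm lam)) : {linear _ -> _}); split; first exact: schur_cp.
rewrite (MmE lam1); split; first by apply: schur_tp; apply: Mm_diag.
move=> z; split.
  move=> [/schur_spec h z0]; move/(Mm_entries _ k0 z0): h.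
  by case=> [->|[i [->|->]]]; rewrite ?cL.
move=> zL; have z0 := nz _ zL; split=> //; apply/schur_spec/(Mm_entries _ k0 z0).
case: (eqVneq z 1) => [->|z1]; first by left.
right.
have zL' : z \in L by rewrite /L (mem_rem_uniq _ uL) inE z1.
have hi : (index z L < k)%N.
  have h1 : (index z L < size L)%N by rewrite index_mem.
  apply: (leq_trans h1); rewrite /L size_rem // /k.
  exact: leq_maxl.
by exists (Ordinal hi); left; rewrite /lam nth_index.
Qed.
End Gen.

Section P3.
Variable C : numClosedFieldType.

Lemma rank_adj m n (A : 'M[C]_(m, n)) : \rank (adjmx A) = \rank A.
Proof. by rewrite /adjmx mxrank_map mxrank_tr. Qed.
Lemma rank_col m1 m2 n (A : 'M[C]_(m1, n)) (B : 'M[C]_(m2, n)) :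
  (\rank (col_mx A B) <= \rank A + \rank B)%N.
Proof. by rewrite -(addsmxE A B) mxrank_adds_leqif. Qed.

Lemma mulmx_adjE m n p (A : 'M[C]_(m, n)) (B : 'M[C]_(p, n)) i j :
  (A *m adjmx B) i j = \sum_k A i k * (B j k)^*.
Proof. by rewrite mxE; apply: eq_bigr => k _; rewrite adjmxE. Qed.

Lemma adjmx_col m1 m2 n (A : 'M[C]_(m1, n)) (B : 'M[C]_(m2, n)) :
  adjmx (col_mx A B) = row_mx (adjmx A) (adjmx B).
Proof. by rewrite /adjmx tr_col_mx map_row_mx. Qed.

Lemma adjmx_swap m n p (A : 'M[C]_(m, n)) (B : 'M[C]_(p, n)) :
  A *m adjmx B = adjmx (B *m adjmx A).
Proof. by rewrite adjmxM adjmxK. Qed.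

Lemma normalize n (v : 'rV[C]_n) : v != 0 ->
  let a := sqrtC ((v *m adjmx v) 0 0) in
  0 < a /\ (a^-1 *: v) *m adjmx (a^-1 *: v) = 1%:M.
Proof.
move=> v0 a.
have hpos : 0 < (v *m adjmx v) 0 0.
  rewrite mulmx_adjE.
  have [i vi] : exists i, v 0 i != 0.
    apply/existsP; apply: contraNT v0; rewrite negb_exists => /forallP h.
    by apply/eqP/rowP=> j; rewrite mxE; apply/eqP; move: (h j); rewrite negbK.
  rewrite (bigD1 i) //= ltr_wpDr ?mul_conjC_gt0 //.
  by apply: sumr_ge0 => j _; rewrite mul_conjC_ge0.
have a0 : 0 < a by rewrite sqrtC_gt0.
split=> //.
rewrite adjmxZ -scalemxAl -scalemxAr scalerA.
apply/matrixP=> i j; rewrite !ord1 [in RHS]mxE eqxx mulr1n [LHS]mxE.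
rewrite (conj_Creal (ger0_real (ltW _))); last by rewrite invr_gt0.
by rewrite -invfM -expr2 sqrtCK mulVf // gt_eqF.
Qed.


Lemma compl m : forall n p (R : 'M[C]_(m, n)) (Z : 'M[C]_(p, n)),
  (m + \rank Z <= n)%N ->
  (forall i j, i != j -> (R *m adjmx R) i j = 0) -> R *m adjmx Z = 0 ->
  exists S : 'M[C]_(m, n), [/\ S *m adjmx S = 1%:M, S *m adjmx Z = 0 &
     exists c : 'rV[C]_m, (forall i, 0 <= c 0 i) /\ R = diag_mx c *m S].
Proof.
elim: m => [|m IH] n p R Z hrank hR hRZ.
  exists 0; split; rewrite ?flatmx0 //.
  exists 0; split; first by case.
  by rewrite mulmx0.
move: R hR hRZ hrank; rewrite -addn1 => R hR hRZ hrank.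
set R' := usubmx R; set r := dsubmx R.
have hR' : forall i j, i != j -> (R' *m adjmx R') i j = 0.
  move=> i j hij; rewrite -(hR (lshift 1 i) (lshift 1 j)); last first.
    by apply: contra hij => /eqP/lshift_inj ->.
  by rewrite !mulmx_adjE; apply: eq_bigr => k _; rewrite !mxE.
have hR'Z : R' *m adjmx (col_mx Z r) = 0.
  apply/matrixP => i j; rewrite [RHS]mxE.
  case: (split_ordP j) => j' ->.
    have h := hRZ; move/matrixP: h => /(_ (lshift 1 i) j'); rewrite [RHS]mxE => h.
    by rewrite -h !mulmx_adjE; apply: eq_bigr => k _; rewrite col_mxEu mxE.
  rewrite -(hR (lshift 1 i) (rshift m j')); last by rewrite eq_shift.
  by rewrite !mulmx_adjE; apply: eq_bigr => k _; rewrite col_mxEd !mxE !ord1.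
have hrank' : (m + \rank (col_mx Z r) <= n)%N.
  apply: leq_trans hrank; rewrite -addnA leq_add2l.
  apply: leq_trans (rank_col Z r) _; rewrite addnC leq_add2r; exact: rank_leq_row.
have [S' [hS'1 hS'Z' [c' [hc' hR'E]]]] := IH n (p + 1)%N R' (col_mx Z r) hrank' hR' hR'Z.
move: hS'Z'; rewrite adjmx_col mul_mx_row => /eqP; rewrite row_mx_eq0 => /andP[/eqP hS'Z /eqP hS'r].
have hrZ : r *m adjmx Z = 0.
  by move: hRZ; rewrite -[R]vsubmxK mul_col_mx => /eqP; rewrite col_mx_eq0 => /andP[_ /eqP].
have [s [x [hs1 hS's hsZ hx hrx]]] : exists (s : 'rV[C]_n) (x : C),
    [/\ s *m adjmx s = 1%:M, S' *m adjmx s = 0, s *m adjmx Z = 0, 0 <= x & r = x *: s].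
  case: (eqVneq r 0) => [r0|r0].
    set B := col_mx S' Z.
    have hK : kermx (adjmx B) != 0.
      rewrite -mxrank_eq0 mxrank_ker rank_adj -lt0n subn_gt0.
      apply: leq_ltn_trans (rank_col S' Z) _.
      apply: leq_ltn_trans (leq_add (rank_leq_row S') (leqnn _)) _.
      by apply: (leq_trans _ hrank); rewrite addnAC addn1.
    have [v hv v0] := rowV0Pn hK.
    move/sub_kermxP: hv; rewrite adjmx_col mul_mx_row => /eqP.
    rewrite row_mx_eq0 => /andP[/eqP hvS /eqP hvZ].
    have [a0 hn] := normalize v0; set a := sqrtC _ in a0 hn.
    exists (a^-1 *: v), 0; split => //.
    - by rewrite adjmx_swap -scalemxAl hvS scaler0 adjmx0.
    - by rewrite -scalemxAl hvZ scaler0.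
    - by rewrite r0 scale0r.
  have [a0 hn] := normalize r0; set a := sqrtC _ in a0 hn.
  exists (a^-1 *: r), a; split => //.
  - by rewrite adjmxZ -scalemxAr hS'r scaler0.
  - by rewrite -scalemxAl hrZ scaler0.
  - exact: ltW.
  - by rewrite scalerA mulfV ?scale1r // gt_eqF.
exists (col_mx S' s); split.
- rewrite adjmx_col mul_col_row hS'1 hS's hs1 adjmx_swap hS's adjmx0.
  by rewrite [RHS]scalar_mx_block.
- by rewrite mul_col_mx hS'Z hsZ col_mx0.
exists (row_mx c' (const_mx x)); split.
  by move=> i; case: (split_ordP i) => j ->; rewrite ?row_mxEl ?row_mxEr ?mxE.
rewrite -[R]vsubmxK -/R' -/r hR'E hrx diag_mx_row mul_block_col !mul0mx addr0 add0r.
by rewrite diag_const_mx mul_scalar_mx.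
Qed.


Lemma spec_dec n (A : 'M[C]_n) : A *m adjmx A = adjmx A *m A ->
  exists P (e : 'rV[C]_n), [/\ P *m adjmx P = 1%:M, adjmx P *m P = 1%:M &
     A = adjmx P *m diag_mx e *m P].
Proof.
move=> hAn.
have hN : A \is normalmx by apply/normalmxP.
have hP := spectral_unitarymx A.
move/orthomx_spectralP: hN => hA.
have e : invmx (spectralmx A) = adjmx (spectralmx A) := invmx_unitary hP.
exists (spectralmx A), (spectral_diag A); split.
- exact/unitarymxP.
- by rewrite -e mulVmx // spectral_unit.
- by rewrite {1}hA e.
Qed.

Lemma adjmx_diag_nn n (c : 'rV[C]_n) : (forall i, 0 <= c 0 i) ->
  adjmx (diag_mx c) = diag_mx c.
Proof.
move=> hc; apply/matrixP=> i j; rewrite adjmxE !mxE eq_sym.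
case: eqP => [->|]; rewrite ?mulr1n ?mulr0n ?conjC0 //.
by rewrite conj_Creal // ger0_real.
Qed.

Lemma polar d (X : 'M[C]_d) : exists U P (c : 'rV[C]_d),
  [/\ adjmx U *m U = 1%:M, P *m adjmx P = 1%:M, adjmx P *m P = 1%:M,
      (forall i, 0 <= c 0 i) & X = U *m diag_mx c *m P].
Proof.
have hA : adjmx (adjmx X *m X) = adjmx X *m X by rewrite adjmxM adjmxK.
have hn : (adjmx X *m X) *m adjmx (adjmx X *m X) = adjmx (adjmx X *m X) *m (adjmx X *m X).
  by rewrite hA.
have [P [e [hP1 hP2 hAe]]] := @spec_dec d (adjmx X *m X) hn.
set G := X *m adjmx P.
have hG : adjmx G *m G = diag_mx e.
  rewrite /G adjmxM adjmxK mulmxA -(mulmxA P) hAe !mulmxA hP1 mul1mx.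
  by rewrite -mulmxA hP1 mulmx1.
have hoff : forall i j, i != j -> (adjmx G *m adjmx (adjmx G)) i j = 0.
  by move=> i j hij; rewrite adjmxK hG mxE (negbTE hij) mulr0n.
have hr0 : (d + \rank (0 : 'M[C]_(0, d))%R <= d)%N by rewrite mxrank0 addn0.
have hz0 : adjmx G *m adjmx (0 : 'M[C]_(0, d)) = 0 by rewrite adjmx0 mulmx0.
have [S [hS1 _ [c [hc hR]]]] := compl hr0 hoff hz0.
exists (adjmx S), P, c; split => //.
  by rewrite adjmxK.
have -> : X = G *m P by rewrite /G -mulmxA hP2 mulmx1.
by rewrite -[G]adjmxK hR adjmxM adjmx_diag_nn // mulmxA.
Qed.

End P3.

Section P4.
Variable C : numClosedFieldType.

Definition phi d (q : 'cV[C]_d) (M : 'M[C]_d) := (adjmx q *m M *m q) 0 0.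

Lemma phiD d (q : 'cV[C]_d) A B : phi q (A + B) = phi q A + phi q B.
Proof. by rewrite /phi mulmxDr mulmxDl mxE. Qed.
Lemma phiN d (q : 'cV[C]_d) A : phi q (- A) = - phi q A.
Proof. by rewrite /phi mulmxN mulNmx mxE. Qed.
Lemma phiB d (q : 'cV[C]_d) A B : phi q (A - B) = phi q A - phi q B.
Proof. by rewrite phiD phiN. Qed.
Lemma phiZ d (q : 'cV[C]_d) a A : phi q (a *: A) = a * phi q A.
Proof. by rewrite /phi -scalemxAr -scalemxAl mxE. Qed.
Lemma phi_adj d (q : 'cV[C]_d) A : phi q (adjmx A) = (phi q A)^*.
Proof.
rewrite /phi -[in RHS]adjmxE.
by rewrite !adjmxM adjmxK mulmxA.
Qed.

Lemma aux4 (V : zmodType) (a x b : V) : a - x + (- x + b) = a + b - (x + x).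
Proof. by rewrite [- x + b]addrC addrACA opprD. Qed.

Lemma amgm d (T : {linear 'M[C]_d -> 'M[C]_d}) (hT : positive_map T)
  (q u v : 'cV[C]_d) :
  `|phi q (T (u *m adjmx v))| *+ 2 <=
    phi q (T (u *m adjmx u)) + phi q (T (v *m adjmx v)).
Proof.
have pos : forall w : 'cV[C]_d, 0 <= phi q (T (w *m adjmx w)).
  by move=> w; case: (hT _ (psd_rank1 w)) => _; apply.
set c := phi q (T (u *m adjmx v)).
have hcc : phi q (T (v *m adjmx u)) = c^*.
  by rewrite -phi_adj herm_pres // adjmxM adjmxK.
case: (eqVneq c 0) => [->|c0].
  by rewrite normr0 mul0rn addr_ge0.
set t := c / `|c|.
have hn : `|c| != 0 by rewrite normr_eq0.
have ht : t^* * c = `|c|.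
  have hr : `|c|^-1 \is Num.real by rewrite realV normr_real.
  rewrite /t rmorphM /= (conj_Creal hr) mulrAC [c^* * c]mulrC -normCK.
  by rewrite expr2 mulfK.
have ht' : t * c^* = `|c|.
  by rewrite -[RHS]conj_Creal ?normr_real // -ht rmorphM /= conjCK mulrC.
have htt : t * t^* = 1.
  have hr : `|c|^-1 \is Num.real by rewrite realV normr_real.
  rewrite /t rmorphM /= (conj_Creal hr) mulrACA -normCK expr2 -invfM mulfV //.
  by rewrite mulf_neq0.
have := pos (u - t *: v).
rewrite adjmxB adjmxZ mulmxBl !mulmxBr -!scalemxAl -!scalemxAr scalerA.
rewrite htt scale1r !raddfB /= !linearZ /= !(phiD, phiN, phiZ) hcc -/c !mulrN ht ht' opprK.
rewrite aux4 subr_ge0 => h.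
by rewrite mulr2n.
Qed.


Lemma phi_row d (P M : 'M[C]_d) l :
  (P *m M *m adjmx P) l l = phi (adjmx (row l P)) M.
Proof.
rewrite /phi adjmxK mxE [RHS]mxE; apply: eq_bigr => k _.
by rewrite -row_mul !mxE.
Qed.

Lemma sum_phi d (P M : 'M[C]_d) : adjmx P *m P = 1%:M ->
  \sum_l phi (adjmx (row l P)) M = \tr M.
Proof.
move=> hP; rewrite -[\tr M]/(\tr M).
have -> : \tr M = \tr (P *m M *m adjmx P).
  by rewrite mxtrace_mulC mulmxA hP mul1mx.
by rewrite /mxtrace; apply: eq_bigr => l _; rewrite phi_row.
Qed.

Lemma tr_bound d (T : {linear 'M[C]_d -> 'M[C]_d}) (hT : positive_map T)
  (htp : trace_preserving T) (N : 'M[C]_d) :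
  N *m adjmx N = 1%:M -> adjmx N *m N = 1%:M ->
  forall u v : 'cV[C]_d, adjmx u *m u = 1%:M -> adjmx v *m v = 1%:M ->
  `|\tr (N *m T (u *m adjmx v))| <= 1.
Proof.
move=> hN1 hN2 u v hu hv.
have hNn : N *m adjmx N = adjmx N *m N by rewrite hN1 hN2.
have [P [mu [hP1 hP2 hNe]]] := spec_dec hNn.
pose q l := adjmx (row l P).
have trE : forall M, \tr (N *m M) = \sum_l mu 0 l * phi (q l) M.
  move=> M; rewrite hNe -!mulmxA mxtrace_mulC -!mulmxA mul_diag_mx /mxtrace.
  by apply: eq_bigr => l _; rewrite mxE -phi_row !mulmxA.
have hmu : forall l, `|mu 0 l| = 1.
  have hD : diag_mx mu = P *m N *m adjmx P.
    by rewrite hNe !mulmxA hP1 mul1mx -mulmxA hP1 mulmx1.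
  have hDD : diag_mx mu *m adjmx (diag_mx mu) = 1%:M.
    rewrite hD !adjmxM adjmxK !mulmxA -(mulmxA (P *m N) (adjmx P) P) hP2 mulmx1.
    by rewrite -(mulmxA P N (adjmx N)) hN1 mulmx1 hP1.
  move=> l; move/matrixP: hDD => /(_ l l); rewrite mul_diag_mx !mxE eqxx !mulr1n.
  rewrite -normCK => /eqP; rewrite sqrp_eq1 ?normr_ge0 //; exact: eqP.
have hsum : forall w : 'cV[C]_d, adjmx w *m w = 1%:M ->
    \sum_l phi (q l) (T (w *m adjmx w)) = 1.
  move=> w hw; rewrite sum_phi // htp mxtrace_mulC hw.
  by rewrite mxtrace1.
rewrite trE.
apply: le_trans (ler_norm_sum _ _ _) _.
under eq_bigr => l _ do rewrite normrM hmu mul1r.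
rewrite -(@ler_pMn2r _ 2%N) // -sumrMnl.
apply: le_trans (ler_sum _ (fun l _ => amgm hT (q l) u v)) _.
by rewrite big_split /= !hsum // -mulr2n.
Qed.


Lemma spec_le1 d (T : {linear 'M[C]_d -> 'M[C]_d}) (hT : positive_map T)
  (htp : trace_preserving T) z : in_spec T z -> `|z| <= 1.
Proof.
move/spec_eig => [X X0 hTX].
have [U [P [c [hU hP1 hP2 hc hX]]]] := polar X.
have hU2 : U *m adjmx U = 1%:M by apply: mulmx1C.
set N := adjmx (U *m P).
have hN1 : N *m adjmx N = 1%:M.
  by rewrite /N adjmxK adjmxM mulmxA -(mulmxA (adjmx P)) hU mulmx1 hP2.
have hN2 : adjmx N *m N = 1%:M.
  by rewrite /N adjmxK adjmxM mulmxA -(mulmxA U) hP1 mulmx1 hU2.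
pose u k := col k U.
pose v k := adjmx (row k P).
have hXsum : X = \sum_k c 0 k *: (u k *m adjmx (v k)).
  rewrite hX; apply/matrixP=> i j; rewrite summxE mxE.
  apply: eq_bigr => k _; rewrite mul_mx_diag !mxE big_ord1 adjmxK !mxE.
  by rewrite mulrA [c 0 k * _]mulrC.
have htrX : \tr (N *m X) = \sum_k c 0 k.
  rewrite /N hX adjmxM !mulmxA -(mulmxA (adjmx P) (adjmx U) U) hU mulmx1.
  by rewrite mxtrace_mulC mulmxA hP1 mul1mx mxtrace_diag.
have hu : forall k, adjmx (u k) *m u k = 1%:M.
  move=> k; apply/matrixP=> i j; rewrite !ord1.
  move/matrixP: hU => /(_ k k); rewrite !mxE eqxx => <-.
  by apply: eq_bigr => t _; rewrite !mxE.
have hv : forall k, adjmx (v k) *m v k = 1%:M.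
  move=> k; apply/matrixP=> i j; rewrite !ord1.
  move/matrixP: hP1 => /(_ k k); rewrite !mxE eqxx => <-.
  by apply: eq_bigr => t _; rewrite /v adjmxK !adjmxE !mxE.
have hz : z * \sum_k c 0 k = \sum_k c 0 k * \tr (N *m T (u k *m adjmx (v k))).
  rewrite -htrX -mxtraceZ scalemxAr -hTX hXsum linear_sum mulmx_sumr raddf_sum.
  by apply: eq_bigr => k _; rewrite linearZ /= -scalemxAr mxtraceZ.
have hS : 0 < \sum_k c 0 k.
  rewrite lt_def sumr_ge0 // andbT; apply: contra X0 => /eqP.
  move/psumr_eq0P => h; apply/eqP; rewrite hXsum big1 // => k _.
  by rewrite h // scale0r.
have hSn : `|\sum_k c 0 k| = \sum_k c 0 k := ger0_norm (ltW hS).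
rewrite -(ler_pM2r hS) mul1r -{1}hSn -normrM hz.
apply: le_trans (ler_norm_sum _ _ _) _.
apply: ler_sum => k _; rewrite normrM (ger0_norm (hc k)).
by rewrite ler_piMr // tr_bound.
Qed.

End P4.


Section Final.
Variable C : numClosedFieldType.

Lemma spec_conj d (T : {linear 'M[C]_d -> 'M[C]_d}) (hT : positive_map T) z :
  in_spec T z -> in_spec T z^*.
Proof.
move/spec_eig => [X X0 hTX]; apply/spec_eig; exists (adjmx X).
  by apply: contra X0 => /eqP h; rewrite -[X]adjmxK h adjmx0.
by rewrite -herm_pres // hTX adjmxZ.
Qed.

Lemma spec_one d (T : {linear 'M[C]_d -> 'M[C]_d}) (d0 : (0 < d)%N)
  (htp : trace_preserving T) : in_spec T 1.
Proof.
move=> [g _ hg2]; pose i0 := Ordinal d0.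
have := congr1 mxtrace (hg2 (delta_mx i0 i0)); rewrite /= raddfB /= htp scale1r subrr.
rewrite /mxtrace (bigD1 i0) //= mxE !eqxx big1 ?addr0 => [|j hj]; last first.
  by rewrite mxE (negbTE hj).
by move/eqP; rewrite eq_sym oner_eq0.
Qed.
End Final.

Theorem theorem3 (C : numClosedFieldType) :
  (forall Lambda : seq C,
     uniq Lambda ->
     (forall l, l \in Lambda -> l != 0) ->
     (forall l, l \in Lambda -> l^* \in Lambda) ->
     1 \in Lambda ->
     (forall l, l \in Lambda -> `|l| <= 1) ->
     exists d : nat, (d <= 2 * maxn (size Lambda).-1 1)%N /\
       exists T : {linear 'M[C]_d -> 'M[C]_d},
         completely_positive T /\ trace_preserving T /\
         (forall z : C, (in_spec T z /\ z != 0) <-> z \in Lambda))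
  /\
  (forall (d : nat) (T : {linear 'M[C]_d -> 'M[C]_d}),
     (0 < d)%N -> positive_map T -> trace_preserving T ->
     (forall z, in_spec T z -> in_spec T z^*) /\
     in_spec T 1 /\
     (forall z, in_spec T z -> `|z| <= 1)).
Proof.
split.
  by move=> Lambda; apply: part1.
move=> d T d0 hT htp; split; first by move=> z; apply: spec_conj.
split; first exact: spec_one.
by move=> z; apply: spec_le1.
Qed.
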